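(* Let $n$ be an odd integer. If an edge-coloring of a complete graph contains no rainbow $n$-cycle, then it contains no rainbow $m$-cycle for every integer $m \ge n^3/2$.
   Context: A coloring is an arbitrary (not necessarily proper) assignment of colors, from an arbitrary set, to the edges of an undirected complete graph; the graph may be finite or infinite. A rainbow $n$-cycle is a cycle through $n$ distinct vertices whose $n$ edges all receive pairwise distinct colors. *)

(* Defs.v *)
From mathcomp Require Import all_boot.
Set Implicit Arguments. Unset Strict Implicit. Unset Printing Implicit Defensive.

(* An edge-coloring of the complete graph on vertex set V (finite or infinite)
   with colors from an arbitrary type C: a function on pairs of vertices which
   is symmetric (so it is a function of the unordered edge {x,y}); its values on
   the diagonal are irrelevant (loops are not edges). *)
Definition edge_coloring (V C : Type) (c : V -> V -> C) : Prop :=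
  forall x y : V, c x y = c y x.

Definition rainbow_cycle (V C : Type) (c : V -> V -> C) (n : nat) : Prop :=
  3 <= n /\
  exists v : 'I_n -> V,
    injective v /\ injective (fun i : 'I_n => c (v i) (v (ordS i))).

(* Main.v *)
Require Import Defs.
From mathcomp Require Import all_boot zify.
From Stdlib Require Import Classical.
Set Implicit Arguments. Unset Strict Implicit. Unset Printing Implicit Defensive.

Lemma mk_rainbow V C (c : V -> V -> C) (k : nat) (w : nat -> V) :
  3 <= k ->
  (forall i j, i < k -> j < k -> w i = w j -> i = j) ->
  (forall i j, i < k -> j < k -> c (w i) (w (i.+1 %% k)) = c (w j) (w (j.+1 %% k)) -> i = j) ->
  rainbow_cycle c k.
Proof.
move=> hk hw hc; split=> //.
exists (fun i : 'I_k => w i); split.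
- by move=> i j /= h; apply: ord_inj; exact: hw (ltn_ord i) (ltn_ord j) h.
- by move=> i j /= h; apply: ord_inj; exact: hc (ltn_ord i) (ltn_ord j) h.
Qed.

Definition ecol V C (c : V -> V -> C) (u : nat -> V) (i : nat) : C := c (u i) (u i.+1).

Definition bigcyc V C (c : V -> V -> C) (L : nat) (u : nat -> V) : Prop :=
  [/\ 0 < L, (forall i, u (i %% L) = u i),
      (forall i j, u i = u j -> i %% L = j %% L) &
      (forall i j, ecol c u i = ecol c u j -> i %% L = j %% L)].

Lemma of_rainbow V C (c : V -> V -> C) L :
  rainbow_cycle c L -> exists u, bigcyc c L u.
Proof.
case=> hL [v [vinj cinj]].
have L0 : 0 < L by apply: leq_trans hL.
pose o i : 'I_L := Ordinal (ltn_pmod i L0).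
exists (fun i => v (o i)); split=> //.
- by move=> i; congr v; apply: ord_inj; rewrite /= modn_mod.
- by move=> i j /vinj/(congr1 val).
- move=> i j; rewrite /ecol => h.
  have e : forall k, o k.+1 = ordS (o k).
    by move=> k; apply: ord_inj; rewrite /= -[in RHS]addn1 modnDml addn1.
  by move: h; rewrite !e => /cinj/(congr1 val).
Qed.



Lemma bc_per V C (c : V -> V -> C) L u i : bigcyc c L u -> u (i + L) = u i.
Proof. by case=> L0 hp _ _; rewrite -hp modnDr hp. Qed.

Lemma bc_perL V C (c : V -> V -> C) L u : bigcyc c L u -> u L = u 0.
Proof. by move=> h; rewrite -(bc_per 0 h). Qed.

Lemma bc_inj V C (c : V -> V -> C) L u i j :
  bigcyc c L u -> i < L -> j < L -> u i = u j -> i = j.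
Proof. by case=> _ _ hi _ li lj /hi; rewrite !modn_small. Qed.

Lemma bc_einj V C (c : V -> V -> C) L u i j :
  bigcyc c L u -> i < L -> j < L -> ecol c u i = ecol c u j -> i = j.
Proof. by case=> _ _ _ hi li lj /hi; rewrite !modn_small. Qed.

Lemma bc_emod V C (c : V -> V -> C) L u i :
  bigcyc c L u -> ecol c u (i %% L) = ecol c u i.
Proof.
case=> L0 hp _ _; rewrite /ecol hp; congr c.
by rewrite -hp -[in RHS]hp -[in RHS]addn1 -modnDml addn1.
Qed.

Lemma bc_rot V C (c : V -> V -> C) L u a :
  bigcyc c L u -> bigcyc c L (fun i => u (a + i)).
Proof.
case=> L0 hp hi he; split=> //.
- by move=> i; rewrite -hp modnDmr hp.
- by move=> i j /hi /eqP; rewrite eqn_modDl => /eqP.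
- move=> i j h; apply/eqP; rewrite -(eqn_modDl a); apply/eqP; apply: he.
  by move: h; rewrite /ecol /= !addnS.
Qed.

Lemma arc_chord V C (c : V -> V -> C) L u p s :
  edge_coloring c -> bigcyc c L u -> 2 <= s -> s < L ->
  rainbow_cycle c s.+1 \/ exists2 i, i < s & c (u p) (u (p + s)) = ecol c u (p + i).
Proof.
move=> sym hb s2 sL.
case: (classic (exists2 i, i < s & c (u p) (u (p + s)) = ecol c u (p + i))) => hc0; [by right | left].
have key : forall i, i < s.+1 ->
  c (u (p + i)) (u (p + i.+1 %% s.+1)) = if i < s then ecol c u (p + i) else c (u p) (u (p + s)).
  move=> i; rewrite ltnS leq_eqVlt => /orP [/eqP -> | lis].
    by rewrite ltnn modnn addn0 sym.
  by rewrite lis modn_small ?ltnS // /ecol addnS.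
apply: (@mk_rainbow _ _ c s.+1 (fun i => u (p + i))) => //.
- move=> i j li lj h.
  exact: (bc_inj (bc_rot p hb) (leq_trans li sL) (leq_trans lj sL) h).
- move=> i j li lj; rewrite !key //.
  case: ltnP => his; case: ltnP => hjs.
  + move=> e; apply: (bc_einj (bc_rot p hb) (ltn_trans his sL) (ltn_trans hjs sL)).
    by move: e; rewrite /ecol /= !addnS.
  + by move=> e; case: hc0; exists i => //; rewrite e.
  + by move=> e; case: hc0; exists j => //; rewrite -e.
  + by move=> _; lia.
Qed.

Lemma split_cyc V C (c : V -> V -> C) l s :
  edge_coloring c -> rainbow_cycle c l -> 2 <= s -> s + 2 <= l ->
  rainbow_cycle c s.+1 \/ rainbow_cycle c (l - s).+1.
Proof.
move=> sym R s2 sl; have [u hb] := of_rainbow R.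
have sl' : s < l by lia.
have [A|[i1 li1 e1]] := arc_chord 0 sym hb s2 sl'; first by left.
have s2' : 2 <= l - s by lia.
have sl2 : l - s < l by lia.
have [B|[i2 li2 e2]] := arc_chord s sym hb s2' sl2; first by right.
exfalso; move: e2; rewrite subnKC; last by lia.
rewrite (bc_perL hb) sym add0n in e1 *; rewrite e1 add0n.
move/(bc_einj hb); lia.
Qed.

Lemma bad_add V C (c : V -> V -> C) x y :
  edge_coloring c -> ~ rainbow_cycle c (x + 2) -> ~ rainbow_cycle c (y + 2) ->
  1 <= x -> 1 <= y -> ~ rainbow_cycle c (x + y + 2).
Proof.
move=> sym bx byy x1 y1 R.
have h1 : 2 <= x.+1 by lia.
have h2 : x.+1 + 2 <= x + y + 2 by lia.
have [A|B] := split_cyc sym R h1 h2.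
- by apply: bx; move: A; rewrite (_ : x.+2 = x + 2) //; lia.
- by apply: byy; move: B; rewrite (_ : (x + y + 2 - x.+1).+1 = y + 2) //; lia.
Qed.

Lemma bad_mul V C (c : V -> V -> C) d :
  edge_coloring c -> 1 <= d -> ~ rainbow_cycle c (d + 2) ->
  forall i, 1 <= i -> ~ rainbow_cycle c (i * d + 2).
Proof.
move=> sym d1 bd; elim=> // i IH _.
case: (posnP i) => [->|ip]; first by rewrite mul1n.
rewrite mulSnr; apply: bad_add => //; [exact: IH | by rewrite muln_gt0 ip].
Qed.

Definition early V C (c : V -> V -> C) u g a :=
  exists2 e, e < g & c (u a) (u (a + 2 * g)) = ecol c u (a + e).
Definition late V C (c : V -> V -> C) u g a :=
  exists2 e, e < g & c (u a) (u (a + 2 * g)) = ecol c u (a + g + e).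

Definition xvp g i := if i == 0 then 0 else if i <= g.+1 then (2 * g).+1 - i else i + 2 * g - 2.
Definition xpos g e1 e2 i := if i == 0 then e1 else if i <= g then 2 * g - i
              else if i == g.+1 then 2 * g + e2 else i + 2 * g - 2.

Lemma xvp_spec g i : (i = 0 /\ xvp g i = 0) \/ (0 < i <= g.+1 /\ xvp g i = (2 * g).+1 - i)
  \/ (g.+1 < i /\ xvp g i = i + 2 * g - 2).
Proof.
rewrite /xvp; case: (posnP i) => [->|i0]; first by left.
by case: (leqP i g.+1) => ig; right; [left|right].
Qed.

Lemma xpos_spec g e1 e2 i : (i = 0 /\ xpos g e1 e2 i = e1) \/ (0 < i <= g /\ xpos g e1 e2 i = 2 * g - i)
  \/ (i = g.+1 /\ xpos g e1 e2 i = 2 * g + e2) \/ (g.+1 < i /\ xpos g e1 e2 i = i + 2 * g - 2).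
Proof.
rewrite /xpos; case: (posnP i) => [->|i0]; first by left.
case: (leqP i g) => ig; first by right; left.
case: eqP => ig2; first by right; right; left; split.
by right; right; right; split => //; lia.
Qed.

Lemma xvp_mid g i : 0 < i <= g.+1 -> xvp g i = (2 * g).+1 - i.
Proof. by case/andP => i0 ig; rewrite /xvp ig ifF //; lia. Qed.
Lemma xvp_hi g i : g.+1 < i -> xvp g i = i + 2 * g - 2.
Proof. by move=> h; rewrite /xvp !ifF //; lia. Qed.
Lemma xpos_mid g e1 e2 i : 0 < i <= g -> xpos g e1 e2 i = 2 * g - i.
Proof. by case/andP => i0 ig; rewrite /xpos ig ifF //; lia. Qed.
Lemma xpos_g g e1 e2 : xpos g e1 e2 g.+1 = 2 * g + e2.
Proof. by rewrite /xpos eqxx !ifF //; lia. Qed.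
Lemma xpos_hi g e1 e2 i : g.+1 < i -> xpos g e1 e2 i = i + 2 * g - 2.
Proof. by move=> h; rewrite /xpos !ifF //; lia. Qed.

Lemma crossing0 V C (c : V -> V -> C) L g u :
  edge_coloring c -> bigcyc c L u -> 2 <= g -> 3 * g < L ->
  ~ rainbow_cycle c (L - 2 * g + 2) -> early c u g 0 -> late c u g g -> False.
Proof.
move=> sym hb g2 gL bk [e1 le1 E1] [e2 le2 E2].
apply: bk; apply: (@mk_rainbow _ _ c (L - 2 * g + 2) (fun i => u (xvp g i))); first by lia.
- move=> i j ik jk e.
  have vpL : forall i, i < L - 2 * g + 2 -> xvp g i < L.
    by move=> x xk; case: (xvp_spec g x) => [[_ ->]|[[_ ->]|[_ ->]]]; lia.
  have := bc_inj hb (vpL _ ik) (vpL _ jk) e.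
  by case: (xvp_spec g i) => [[? ->]|[[? ->]|[? ->]]];
     case: (xvp_spec g j) => [[? ->]|[[? ->]|[? ->]]]; lia.
have key : forall i, i < L - 2 * g + 2 ->
    c (u (xvp g i)) (u (xvp g (i.+1 %% (L - 2 * g + 2)))) = ecol c u (xpos g e1 e2 i).
  move=> i ik.
  case: (posnP i) => [->|i0].
    rewrite modn_small; last by lia.
    rewrite (@xvp_mid g 1); last by lia.
    rewrite (_ : (2 * g).+1 - 1 = 0 + 2 * g); last by lia.
    by rewrite /xvp /xpos /= E1.
  case: (leqP i g) => ig.
    rewrite modn_small; last by lia.
    rewrite (@xvp_mid g i); last by lia.
    rewrite (@xvp_mid g i.+1); last by lia.
    rewrite xpos_mid; last by lia.
    rewrite /ecol sym; congr (c (u _) (u _)); lia.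
  case: (eqVneq i g.+1) => [->|ign].
    rewrite modn_small; last by lia.
    rewrite (@xvp_mid g g.+1); last by lia.
    rewrite (@xvp_hi g g.+2); last by lia.
    rewrite xpos_g.
    rewrite (_ : (2 * g).+1 - g.+1 = g); last by lia.
    rewrite (_ : g.+2 + 2 * g - 2 = g + 2 * g); last by lia.
    by rewrite (_ : 2 * g + e2 = g + g + e2) ?E2 //; lia.
  case: (ltnP i.+1 (L - 2 * g + 2)) => ik1.
    rewrite modn_small //.
    rewrite (@xvp_hi g i); last by lia.
    rewrite (@xvp_hi g i.+1); last by lia.
    rewrite xpos_hi; last by lia.
    rewrite /ecol; congr (c (u _) (u _)); lia.
  rewrite (_ : i.+1 = L - 2 * g + 2); last by lia.
  rewrite modnn.
  rewrite (@xvp_hi g i); last by lia.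
  rewrite xpos_hi; last by lia.
  rewrite /ecol /xvp /= (_ : (i + 2 * g - 2).+1 = L); last by lia.
  by rewrite (bc_perL hb).
move=> i j ik jk; rewrite !key // => e.
have posL : forall i, i < L - 2 * g + 2 -> xpos g e1 e2 i < L.
  by move=> x xk; case: (xpos_spec g e1 e2 x) => [[_ ->]|[[_ ->]|[[_ ->]|[_ ->]]]]; lia.
have := bc_einj hb (posL _ ik) (posL _ jk) e.
by case: (xpos_spec g e1 e2 i) => [[? ->]|[[? ->]|[[? ->]|[? ->]]]];
   case: (xpos_spec g e1 e2 j) => [[? ->]|[[? ->]|[[? ->]|[? ->]]]]; lia.
Qed.

Lemma bc_eper V C (c : V -> V -> C) L u x : bigcyc c L u -> ecol c u (x + L) = ecol c u x.
Proof. by move=> hb; rewrite /ecol -addSn !(bc_per _ hb). Qed.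

Lemma located V C (c : V -> V -> C) L g u a :
  edge_coloring c -> bigcyc c L u -> 1 <= g -> 2 * g < L -> ~ rainbow_cycle c (2 * g).+1 ->
  early c u g a \/ late c u g a.
Proof.
move=> sym hb g1 gL bn.
have s2 : 2 <= 2 * g by lia.
have [R|[i li E]] := arc_chord a sym hb s2 gL; first by case: bn.
case: (ltnP i g) => ig; first by left; exists i.
right; exists (i - g); first by lia.
by rewrite E (_ : a + g + (i - g) = a + i) //; lia.
Qed.

Lemma excl V C (c : V -> V -> C) L g u a :
  bigcyc c L u -> 2 * g < L -> early c u g a -> late c u g a -> False.
Proof.
move=> hb gL [e le E] [e' le' E'].
have := E; rewrite E' => /esym; case: hb => L0 _ _ he /he /eqP.
rewrite -addnA eqn_modDl !modn_small; lia.
Qed.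

Lemma early_rot V C (c : V -> V -> C) g u a x :
  early c u g (a + x) -> early c (fun i => u (a + i)) g x.
Proof. by case=> e le E; exists e => //; rewrite /ecol; cbv beta; rewrite !addnS (addnA a x (2 * g)) (addnA a x e). Qed.

Lemma late_rot V C (c : V -> V -> C) g u a x :
  late c u g (a + x) -> late c (fun i => u (a + i)) g x.
Proof. by case=> e le E; exists e => //; rewrite /ecol; cbv beta; rewrite !addnS (addnA a x (2 * g)) (addnA a (x + g) e) (addnA a x g). Qed.

Lemma crossing V C (c : V -> V -> C) L g u a :
  edge_coloring c -> bigcyc c L u -> 2 <= g -> 3 * g < L ->
  ~ rainbow_cycle c (2 * g).+1 -> ~ rainbow_cycle c (L - 2 * g + 2) ->
  late c u g a \/ early c u g (a + g).
Proof.
move=> sym hb g2 gL bn bk.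
case: (classic (late c u g a)) => hl; first by left.
case: (classic (early c u g (a + g))) => he; first by right.
exfalso.
have gL2 : 2 * g < L by lia.
have ea : early c u g a by case: (located a sym hb (ltnW g2) gL2 bn).
have la : late c u g (a + g) by case: (located (a + g) sym hb (ltnW g2) gL2 bn).
apply: (crossing0 sym (bc_rot a hb) g2 gL bk).
- by apply: early_rot; rewrite addn0.
- exact: late_rot.
Qed.

Lemma late_per V C (c : V -> V -> C) L g u :
  bigcyc c L u -> late c u g 0 -> late c u g L.
Proof.
move=> hb [e le E]; exists e => //.
rewrite (bc_perL hb) (_ : L + 2 * g = (0 + 2 * g) + L); last by lia.
rewrite (bc_per _ hb) E (_ : L + g + e = (0 + g + e) + L); last by lia.
by rewrite (bc_eper _ hb).
Qed.

Lemma double_inj n i j : odd n -> i < n -> j < n -> (2 * i) %% n = (2 * j) %% n -> i = j.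
Proof.
move=> on.
wlog ij : i j / i <= j.
  by move=> W li lj e; case: (leqP i j) => h; [exact: W | apply/esym/W => //; apply: ltnW].
move=> li lj /eqP; rewrite eq_sym eqn_mod_dvd ?leq_mul2l ?ij ?orbT //.
rewrite -mulnBr Gauss_dvdr ?coprimen2 // => dv.
case: (posnP (j - i)) => h; first by lia.
by have := dvdn_leq h dv; lia.
Qed.

Lemma modmulg g n a e : 0 < g -> 0 < n -> e < g -> (a * g + e) %% (n * g) = (a %% n) * g + e.
Proof.
move=> g0 n0 eg.
rewrite {1}(divn_eq a n) mulnDl -mulnA -addnA modnMDl modn_small //.
have := ltn_pmod a n0; nia.
Qed.

Lemma star V C (c : V -> V -> C) L g u dl :
  edge_coloring c -> bigcyc c L u -> 1 <= g -> L = (2 * g).+1 * g -> dl <= 1 ->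
  (forall y, y < (2 * g).+1 ->
     exists2 e, e < g & c (u (y * g)) (u (y * g + 2 * g)) = ecol c u ((y + dl) * g + e)) ->
  rainbow_cycle c (2 * g).+1.
Proof.
move=> sym hb g1 hL dl1 H.
have hp : forall i, u (i %% L) = u i by case: hb.
have n0 : 0 < (2 * g).+1 by [].
have on : odd (2 * g).+1 by rewrite /= oddM.
have key : forall j, j < (2 * g).+1 -> exists2 e, e < g &
    c (u (((2 * j) %% (2 * g).+1) * g)) (u (((2 * (j.+1 %% (2 * g).+1)) %% (2 * g).+1) * g))
    = ecol c u (((2 * j + dl) %% (2 * g).+1) * g + e).
  move=> j lj.
  have [e le E] := H ((2 * j) %% (2 * g).+1) (ltn_pmod _ n0).
  exists e => //.
  have eqw : ((2 * (j.+1 %% (2 * g).+1)) %% (2 * g).+1) * g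
             = ((((2 * j) %% (2 * g).+1) * g + 2 * g) %% L).
    rewrite hL -mulnDl -muln_modl // modnMmr modnDml.
    by rewrite (_ : 2 * j.+1 = 2 * j + 2) //; lia.
  rewrite eqw hp E -(bc_emod _ hb) hL modmulg //.
  by rewrite modnDml.
apply: (@mk_rainbow _ _ c (2 * g).+1 (fun j => u (((2 * j) %% (2 * g).+1) * g))).
- lia.
- move=> i j li lj e.
  have bd : forall k, ((2 * k) %% (2 * g).+1) * g < L.
    by move=> k; rewrite hL ltn_pmul2r // ltn_pmod.
  have := bc_inj hb (bd i) (bd j) e => /eqP; rewrite eqn_pmul2r // => /eqP.
  exact: double_inj.
- move=> i j li lj.
  have [ei lei ->] := key i li.
  have [ej lej ->] := key j lj.
  have bd : forall k e, e < g -> ((2 * k + dl) %% (2 * g).+1) * g + e < L.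
    by move=> k e' le'; have := ltn_pmod (2 * k + dl) n0; rewrite hL; nia.
  move/(bc_einj hb (bd _ _ lei) (bd _ _ lej)) => /(congr1 (divn^~ g)).
  rewrite !divnMDl // !divn_small // !addn0 => /eqP; rewrite eqn_modDr => /eqP.
  exact: double_inj.
Qed.

Lemma star_bad V C (c : V -> V -> C) L g u :
  edge_coloring c -> bigcyc c L u -> 2 <= g -> L = (2 * g).+1 * g ->
  ~ rainbow_cycle c (2 * g).+1 -> ~ rainbow_cycle c (L - 2 * g + 2) -> False.
Proof.
move=> sym hb g2 hL bn bk.
have gL : 3 * g < L by rewrite hL; nia.
have gL2 : 2 * g < L by lia.
case: (located 0 sym hb (ltnW g2) gL2 bn) => [e0|l0].
- have ally : forall y, early c u g (y * g).
    elim=> [|y IH]; first by rewrite mul0n.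
    case: (crossing (y * g) sym hb g2 gL bn bk) => [l|e]; first by case: (excl hb gL2 IH l).
    by rewrite mulSnr.
  apply: bn; apply: (@star _ _ c L g u 0 sym hb (ltnW g2) hL) => // y _.
  by have [e le E] := ally y; exists e => //; rewrite addn0.
- have lL : late c u g L := late_per hb l0.
  have back : forall t, t <= (2 * g).+1 -> late c u g (((2 * g).+1 - t) * g).
    elim=> [|t IH] ht; first by rewrite subn0 -hL.
    have := IH (ltnW ht).
    have ea : ((2 * g).+1 - t) * g = ((2 * g).+1 - t.+1) * g + g.
      by rewrite -mulSnr; congr (_ * _); lia.
    rewrite ea => la.
    case: (crossing (((2 * g).+1 - t.+1) * g) sym hb g2 gL bn bk) => // e.
    by case: (excl hb gL2 e la).
  apply: bn; apply: (@star _ _ c L g u 1 sym hb (ltnW g2) hL) => // y ly.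
  have := back ((2 * g).+1 - y) (leq_subr _ _); rewrite subKn ?(ltnW ly) //.
  by case=> e le E; exists e => //; rewrite E addn1 mulSnr.
Qed.

Lemma arithD g q r m i j : 2 <= g -> 2 <= m -> m - 2 = q * (2 * g - 1) + r -> j + r = 2 * g - 1 ->
  i + j * (g + 1) = q + 1 -> i * (2 * g - 1) + j * ((2 * g).+1 * g - 2) + 2 = m.
Proof.
move=> g2 m2 hM hj hi.
have P1 : i * (2 * g - 1) + j * (g + 1) * (2 * g - 1) = q * (2 * g - 1) + (2 * g - 1).
  rewrite -mulnDl hi mulnDl mul1n; reflexivity.
have P2' : (2 * g).+1 * g - 2 + 1 = (g + 1) * (2 * g - 1) by clear -g2; nia.
have P2 : j * ((2 * g).+1 * g - 2) + j = j * (g + 1) * (2 * g - 1).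
  rewrite -mulnA -P2' mulnDr muln1; reflexivity.
move: P1 P2 hM.
move: (i * (2 * g - 1)) (j * (g + 1) * (2 * g - 1)) (q * (2 * g - 1)) (j * ((2 * g).+1 * g - 2)) => X Z Q Y.
clear hi P2'; move=> *; lia.
Qed.


Lemma arithA g q r m : 2 <= g -> 1 <= r -> r < 2 * g - 1 -> m - 2 = q * (2 * g - 1) + r ->
  (2 * g).+1 * ((2 * g).+1 * (2 * g).+1) <= 2 * m -> (2 * g - 2) * (g + 1) <= q.
Proof. move=> *; nia. Qed.
Lemma arithB g q m : 1 <= g -> m - 2 = q * (2 * g - 1) + 0 ->
  (2 * g).+1 * ((2 * g).+1 * (2 * g).+1) <= 2 * m -> 1 <= q.
Proof. move=> *; nia. Qed.
Lemma arithC g q r j : 2 <= g -> 1 <= r -> j + r = 2 * g - 1 -> (2 * g - 2) * (g + 1) <= q -> j * (g + 1) <= q.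
Proof. move=> g2 r1 hj hq; have h : j <= 2 * g - 2 by lia. nia. Qed.
Lemma arithE g : 2 <= g -> 2 <= (2 * g).+1 * g.
Proof. move=> *; nia. Qed.
Lemma arithF g : 2 <= g -> (2 * g).+1 * g - 2 * g + 2 = g * (2 * g - 1) + 2.
Proof. move=> *; nia. Qed.
Lemma arithG g : 2 <= g -> 1 <= (2 * g).+1 * g - 2.
Proof. move=> *; nia. Qed.
Lemma arithH g m : 1 <= g -> (2 * g).+1 * ((2 * g).+1 * (2 * g).+1) <= 2 * m -> 14 <= m.
Proof. move=> *; nia. Qed.

Theorem theorem8 (V C : Type) (c : V -> V -> C) (n : nat) :
  3 <= n -> odd n -> edge_coloring c ->
  ~ rainbow_cycle c n ->
  forall m : nat, n ^ 3 <= 2 * m -> ~ rainbow_cycle c m.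
Proof.
move=> n3 on sym bn m hm R.
have [g hg] : exists g, n = (2 * g).+1.
  exists n./2; have := odd_double_half n; rewrite on -muln2; lia.
subst n.
rewrite !expnS expn0 muln1 in hm.
have g1 : 1 <= g by lia.
have m14 := arithH g1 hm.
have d1 : 1 <= 2 * g - 1 by lia.
have bd : ~ rainbow_cycle c ((2 * g - 1) + 2) by rewrite (_ : 2 * g - 1 + 2 = (2 * g).+1) //; lia.
have bmul := bad_mul sym d1 bd.
case: (eqVneq g 1) => [g1e | gne].
  subst g; apply: (bmul (m - 2)); first by lia.
  by move: R; rewrite (_ : (m - 2) * (2 * 1 - 1) + 2 = m) //; lia.
have g2 : 2 <= g by lia.
have bL0 : ~ rainbow_cycle c ((2 * g).+1 * g - 2 + 2).
  rewrite subnK; last exact: arithE.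
  move=> R0; have [u hb] := of_rainbow R0.
  apply: (star_bad sym hb g2 erefl bn).
  rewrite arithF //.
  by apply: bmul.
have L1 := arithG g2.
have bmul2 := bad_mul sym L1 bL0.
have [q [r [hM hr]]] : exists q r, m - 2 = q * (2 * g - 1) + r /\ r < 2 * g - 1.
  by exists ((m - 2) %/ (2 * g - 1)), ((m - 2) %% (2 * g - 1)); split; [exact: divn_eq | exact: ltn_pmod].
case: (posnP r) => r0.
  subst r; have q1 := arithB g1 hM hm.
  apply: (bmul q q1); move: R; rewrite (_ : q * (2 * g - 1) + 2 = m) //.
  by move: hM; rewrite addn0 => hM; lia.
have hq := arithA g2 r0 hr hM hm.
have [j [hj j1]] : exists j, j + r = 2 * g - 1 /\ 1 <= j by exists (2 * g - 1 - r); lia.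
have hjq := arithC g2 r0 hj hq.
have [i [hi i1]] : exists i, i + j * (g + 1) = q + 1 /\ 1 <= i.
  by exists (q + 1 - j * (g + 1)); split; lia.
have m2 : 2 <= m by lia.
have em := arithD g2 m2 hM hj hi.
have x1 : 1 <= i * (2 * g - 1) by rewrite muln_gt0 i1.
have y1 : 1 <= j * ((2 * g).+1 * g - 2) by rewrite muln_gt0 j1.
apply: (bad_add sym (bmul i i1) (bmul2 j j1) x1 y1).
rewrite em; exact: R.
Qed.
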